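(* Let $T$ be a finite tree and let $P=p_0p_1\dots p_k$ ($k\ge1$) be a path in $T$ such that each of $p_1,\dots,p_{k-1}$ has degree $2$ in $T$. Let $B$ be the vertex set of the component containing $p_k$ of the graph obtained from $T$ by deleting the edges of $P$. Let $T'$ be the tree obtained from $T$ by deleting all edges between $p_k$ and $\Gamma(p_k)\setminus\{p_{k-1}\}$ and adding the edges between $p_0$ and $\Gamma(p_k)\setminus\{p_{k-1}\}$ instead. If $k$ is even, then for every $\ell\ge1$, \[\omega_{\ell}(p_0,T[B\cup P])-\omega_{\ell}(p_0,P)\leq \omega_{\ell}(p_0,T'[B\cup P])-\omega_{\ell}(p_0,P).\]
   Context: $\Gamma(v)$ is the set of neighbours of $v$ in $T$. For a graph $G$ containing the vertices of $B$ and $P$, $G[B\cup P]$ is the subgraph of $G$ induced by $B\cup\{p_0,\dots,p_k\}$. For a graph $G$, a vertex $x$ and $\ell\ge1$, $\omega_\ell(x,G)$ is the number of walks of length $\ell$ in $G$ starting at $x$. $P$ is regarded as a graph (the path). *)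

(* Defs.v *)
From HB Require Import structures.
From mathcomp Require Import all_boot all_order all_algebra.
Set Implicit Arguments. Unset Strict Implicit. Unset Printing Implicit Defensive.

Definition is_tree (V : finType) (e : rel V) : Prop :=
  [/\ symmetric e, irreflexive e,
      (forall x y : V, connect e x y) &
      (forall c : seq V, uniq c -> 2 < size c -> ~~ cycle e c)].

Definition deg (V : finType) (e : rel V) (v : V) : nat := #|[set y | e v y]|.

Definition nwalks (V : finType) (e : rel V) (l : nat) (x : V) : nat :=
  #|[set t : l.-tuple V | path e x t]|.

Definition induced (V : finType) (e : rel V) (S : {set V}) : rel V :=
  fun x y => [&& x \in S, y \in S & e x y].

Definition path_edge (V : finType) (p : nat -> V) (k : nat) : rel V :=
  fun x y => [exists i : 'I_k,
                ((x == p i) && (y == p i.+1)) || ((y == p i) && (x == p i.+1))].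

Definition path_verts (V : finType) (p : nat -> V) (k : nat) : {set V} :=
  [set p (val i) | i : 'I_k.+1].

Definition del_path (V : finType) (e : rel V) (p : nat -> V) (k : nat) : rel V :=
  fun x y => e x y && ~~ path_edge p k x y.

Definition compB (V : finType) (e : rel V) (p : nat -> V) (k : nat) : {set V} :=
  [set x | connect (del_path e p k) (p k) x].

Definition Nk (V : finType) (e : rel V) (p : nat -> V) (k : nat) : {set V} :=
  [set y | e (p k) y & y != p k.-1].

Definition transfer (V : finType) (e : rel V) (p : nat -> V) (k : nat) : rel V :=
  fun x y =>
    [|| [&& e x y, ~~ ((x == p k) && (y \in Nk e p k))
               & ~~ ((y == p k) && (x \in Nk e p k))],
        (x == p 0) && (y \in Nk e p k)
      | (y == p 0) && (x \in Nk e p k)].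

(* Main.v *)
Require Import Defs.
From HB Require Import structures.
From mathcomp Require Import all_boot all_order all_algebra zify.
Import GRing.Theory Num.Theory.

Section Main.
Variables (V : finType) (e : rel V) (p : nat -> V) (k : nat).
Hypothesis tree : is_tree e.
Hypothesis k2 : (2 <= k)%N.
Hypothesis pinj : {in [pred i | (i <= k)%N] &, injective p}.
Hypothesis pe : forall i, (i < k)%N -> e (p i) (p i.+1).
Hypothesis pdeg : forall i, (0 < i < k)%N -> deg e (p i) = 2%N.

Definition W (r : rel V) l x := \sum_(t : l.-tuple V) (path r x t : nat).

Lemma nwalksE r l x : nwalks r l x = W r l x.
Proof.
rewrite /nwalks /W -sum1_card big_mkcond /=; apply: eq_bigr => t _.
by rewrite inE; case: path.
Qed.

Lemma W0 r r' x x' : W r 0 x = W r' 0 x'.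
Proof. by apply: eq_bigr => t _; rewrite tuple0. Qed.

Lemma WS r l x : W r l.+1 x = \sum_(y | r x y) W r l y.
Proof.
rewrite /W (reindex (fun u : V * l.-tuple V => [tuple of u.1 :: u.2])) /=; last first.
  exists (fun t : l.+1.-tuple V => (thead t, [tuple of behead t])).
    by case=> y t _ /=; congr pair; apply: val_inj.
  by move=> t _; rewrite [t in RHS]tuple_eta.
transitivity (\sum_y \sum_(t : l.-tuple V) (path r x (y :: t) : nat)).
  by rewrite pair_bigA.
rewrite [RHS]big_mkcond; apply: eq_bigr => y _ /=.
case: (r x y) => //=; by rewrite big1.
Qed.

Lemma W_iso (r r' : rel V) (f : V -> V) : injective f ->
  (forall x y, r x y = r' (f x) (f y)) -> forall l x, W r l x = W r' l (f x).
Proof.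
move=> finj hr; elim=> [|l IH] x; first exact: W0.
rewrite !WS [RHS](reindex_inj finj); apply: eq_big => y; first by rewrite /= hr.
by move=> _; apply: IH.
Qed.

Lemma W_mono (r r' : rel V) (Q : pred V) c :
  (forall x, Q x -> x != c -> forall y, r x y -> r' x y /\ Q y) ->
  (forall l, W r l c <= W r' l c) ->
  forall l x, Q x -> W r l x <= W r' l x.
Proof.
move=> hQ hc; elim=> [|l IH] x hx; first by rewrite (W0 r r' x x).
case: (eqVneq x c) => [->|hxc]; first exact: hc.
rewrite !WS; apply: (@leq_trans (\sum_(y | r x y) W r' l y)).
  apply: leq_sum => y hy; apply: IH; exact: (hQ x hx hxc y hy).2.
rewrite [X in X <= _]big_mkcond [X in _ <= X]big_mkcond; apply: leq_sum => y _.
case hy: (r x y) => //; by rewrite (hQ x hx hxc y hy).1.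
Qed.


Lemma pinjE i j : i <= k -> j <= k -> (p i == p j) = (i == j).
Proof.
move=> hi hj; apply/eqP/eqP => [h|->//]; exact: pinj.
Qed.

Lemma esym x y : e x y = e y x.
Proof. by case: tree => sy _ _ _; apply: sy. Qed.

Lemma eirr x : e x x = false.
Proof. by case: tree => _ ir _ _; apply: ir. Qed.

Lemma pathE x y : path_edge p k x y ->
  exists i, i < k /\ ((x = p i /\ y = p i.+1) \/ (y = p i /\ x = p i.+1)).
Proof.
case/existsP => i /orP [/andP [/eqP -> /eqP ->]|/andP [/eqP -> /eqP ->]];
 exists i; split => //; by [left|right].
Qed.

Lemma pe_intro i : i < k -> path_edge p k (p i) (p i.+1).
Proof. move=> ik; apply/existsP; exists (Ordinal ik); by rewrite !eqxx. Qed.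

Lemma pe_sym x y : path_edge p k x y = path_edge p k y x.
Proof.
apply/existsP/existsP => -[i hi]; exists i; by rewrite orbC.
Qed.

Lemma pe_e x y : path_edge p k x y -> e x y.
Proof.
case/pathE => i [ik [[-> ->]|[-> ->]]]; first exact: pe.
rewrite esym; exact: pe.
Qed.

Lemma D j y : 0 < j < k -> e (p j) y -> y = p j.-1 \/ y = p j.+1.
Proof.
move=> hj hy.
have e1 : e (p j) (p j.-1).
  rewrite esym; have := pe (j.-1); rewrite prednK; last lia.
  apply; lia.
have e2 : e (p j) (p j.+1) by apply: pe; lia.
have ne : p j.-1 != p j.+1 by rewrite pinjE; lia.
have sub : [set p j.-1; p j.+1] \subset [set y | e (p j) y].
  by apply/subsetP => z; rewrite !inE => /orP [/eqP ->|/eqP ->].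
have eqA : [set p j.-1; p j.+1] = [set y | e (p j) y].
  apply/eqP; rewrite eqEcard sub /=.
  by rewrite cards2 ne; have := pdeg _ hj; rewrite /deg => ->.
have : y \in [set y | e (p j) y] by rewrite inE.
by rewrite -eqA !inE => /orP [/eqP ->|/eqP ->]; [left|right].
Qed.

Lemma D' j y : 0 < j < k -> e (p j) y -> path_edge p k (p j) y.
Proof.
move=> hj hy; case: (D _ _ hj hy) => ->; last by apply: pe_intro; lia.
rewrite pe_sym; have := pe_intro j.-1; rewrite prednK; last lia.
apply; lia.
Qed.

Lemma succ_in_path (r : rel V) x s y z :
  path r x (rcons s y) -> z \in s -> exists w, r z w.
Proof.
move=> hp hz; case/splitPr: hz hp => s1 s2.
rewrite rcons_cat cat_path rcons_cons /= => /andP [_ /andP [_]].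
case: s2 => [|a s2] /= /andP [h _]; by eexists; exact h.
Qed.


Local Notation B := (compB e p k).
Local Notation P := (path_verts p k).
Local Notation N := (Nk e p k).
Local Notation dp := (del_path e p k).

Lemma del_sym x y : dp x y = dp y x.
Proof. by rewrite /del_path esym pe_sym. Qed.

Lemma del_e x y : dp x y -> e x y.
Proof. by case/andP. Qed.

Lemma pk_B : p k \in B.
Proof. by rewrite inE connect0. Qed.

Lemma pP i : i <= k -> p i \in P.
Proof. move=> ik; apply/imsetP; have ik' : i < k.+1 by []. by exists (Ordinal ik'). Qed.

Lemma inP x : x \in P -> exists2 i, i <= k & x = p i.
Proof. by case/imsetP => i _ ->; exists i; rewrite // -ltnS. Qed.

Lemma path_iota i n : i + n <= k -> path e (p i) (map p (iota i.+1 n)).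
Proof.
elim: n i => [//|n IH] i h /=; rewrite pe; last lia.
apply: IH; lia.
Qed.

Lemma last_iota i n : last (p i) (map p (iota i.+1 n)) = p (i + n).
Proof.
elim: n i => [|n IH] i /=; first by rewrite addn0.
rewrite IH; congr p; lia.
Qed.

Lemma mid_nodel j w : 0 < j < k -> dp (p j) w = false.
Proof.
move=> hj; apply/negP => /andP [he hne].
by rewrite (D' _ _ hj he) in hne.
Qed.

Lemma notB i : i < k -> p i \notin B.
Proof.
move=> ik; apply/negP; rewrite inE => /connectP [q hq hl].
case/shortenP: hq hl => q' hq' uq _ hl.
case/lastP: q' hq' uq hl => [|q1 z] hq' uq hl.
  by move/eqP: hl; rewrite /= pinjE ?leqnn ?(ltnW ik) // => /eqP; lia.
rewrite last_rcons in hl; subst z.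
case: (posnP i) => [i0|ipos]; last first.
  move: hq'; rewrite rcons_path => /andP [_].
  by rewrite del_sym mid_nodel //; rewrite ipos.
subst i.
move: uq; rewrite -rcons_cons rcons_uniq /= => /and3P [hn0 hnk uq1].
move: hn0; rewrite inE negb_or => /andP [_ hn0].
have hq'' := hq'.
move: hq'; rewrite rcons_path => /andP [hq1 hlast].
have nomid : forall z, z \in q1 -> z \notin P.
  move=> z hz; apply/negP => /inP [j jk hzj]; subst z.
  case: (posnP j) => [j0|jpos]; first by subst j; rewrite hz in hn0.
  case: (ltnP j k) => jk'; last first.
    have jk2 : j = k by lia.
    by subst j; rewrite hz in hnk.
  have [w hw] := succ_in_path _ _ _ _ _ hq'' hz.
  by rewrite mid_nodel ?jpos in hw.
set c := map p (iota 0 k.+1) ++ q1.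
have uc : uniq c.
  rewrite cat_uniq uq1 andbT map_inj_in_uniq ?iota_uniq; last first.
    move=> a b; rewrite !mem_iota => ha hb; apply: pinj; rewrite inE; lia.
  apply/hasPn => z hz; apply/negP => hz'; have := nomid z hz.
  case/mapP: hz' => j; rewrite mem_iota => hj ->; by rewrite pP //; lia.
have sc : 2 < size c by rewrite size_cat size_map size_iota; lia.
have cc : cycle e c.
  rewrite (cycle_path (p 0)) /c last_cat /= last_iota add0n.
  rewrite cat_path path_iota // last_iota add0n /=.
  rewrite (sub_path del_e hq1) andbT.
  by move/del_e: hlast.
by case: tree => _ _ _ acyc; have := acyc c uc sc; rewrite cc.
Qed.


Local Notation Bp := [set x in B | x \notin P].
Local Notation S := (B :|: P).

Definition desc0 x y := path_edge p k x y || [&& x \in Bp, y \in Bp & e x y].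
Definition descG x y := [|| desc0 x y, (x == p k) && (y \in N) | (y == p k) && (x \in N)].
Definition descG' x y := [|| desc0 x y, (x == p 0) && (y \in N) | (y == p 0) && (x \in N)].

Lemma pe_P x y : path_edge p k x y -> (x \in P) && (y \in P).
Proof.
case/pathE => i [ik [[-> ->]|[-> ->]]]; rewrite !pP //; lia.
Qed.

Lemma B_P x : x \in B -> x \in P -> x = p k.
Proof.
move=> hb /inP [i ik hx]; subst x.
case: (ltnP i k) => h; first by rewrite (negbTE (notB _ h)) in hb.
by have -> : i = k by lia.
Qed.

Lemma N_Bp y : y \in N -> y \in Bp.
Proof.
rewrite !inE => /andP [he hne].
have hB : connect dp (p k) y.
  apply: connect1; rewrite /del_path he /=; apply/negP.
  case/pathE => i [ik [[h1 h2]|[h1 h2]]].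
    by move/eqP: h1; rewrite pinjE; lia.
  move/eqP: h2; rewrite pinjE; [|lia|lia] => /eqP h2.
  by rewrite h1 (_ : i = k.-1) ?eqxx in hne; lia.
rewrite hB /=; apply/negP => hP.
have hyB : y \in B by rewrite inE.
have hy := B_P _ hyB hP.
by rewrite hy eirr in he.
Qed.

Lemma L0 y : y \in B -> e y (p 0) -> path_edge p k y (p 0).
Proof.
move=> hy he; case: (boolP (path_edge p k y (p 0))) => // hne.
exfalso.
have : p 0 \in B.
  move: hy; rewrite !inE => hy; apply: (connect_trans hy).
  by apply: connect1; rewrite /del_path he hne.
have h0 : 0 < k by lia. by rewrite (negbTE (notB _ h0)).
Qed.

Lemma descG_sym x y : descG x y = descG y x.
Proof.
rewrite /descG /desc0 pe_sym esym.
move: (x \in Bp) (y \in Bp) (x == p k) (y == p k) (x \in N) (y \in N)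
  (path_edge p k y x) (e y x) => a b c d f g h i.
by case: a; case: b; case: c; case: d; case: f; case: g; case: h; case: i.
Qed.


Lemma descG_e x y : descG x y -> e x y.
Proof.
rewrite /descG /desc0 => /or3P [h|h|h].
- case/orP: h => [h|/and3P [_ _ //]]; exact: pe_e.
- case/andP: h => /eqP -> ; rewrite inE => /andP [h _] //.
- case/andP: h => /eqP -> ; rewrite inE => /andP [h _]; by rewrite esym.
Qed.

Lemma aux x y : x \in P -> y \in S -> e x y -> descG x y.
Proof.
move=> /inP [i ik ->] hy he.
have pe1 : path_edge p k (p i) y -> descG (p i) y by rewrite /descG /desc0 => ->.
case: (boolP (0 < i < k)) => hi; first by apply: pe1; apply: D'.
have hi' : i = 0 \/ i = k by lia.
have hyc : (y \in Bp) \/ (exists2 j, j <= k & y = p j).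
  move: hy; rewrite in_setU => /orP [hb|hp]; last by right; apply: inP.
  case: (boolP (y \in P)) => hp; last by left; rewrite inE hb hp.
  by right; apply: inP.
case: hyc => [hb | [j jk hyj]].
- move: (hb); rewrite inE => /andP [hbB hbP].
  case: hi' => hi'; subst i.
  + have := L0 _ hbB; rewrite esym => /(_ he) /pe_P /andP [hh _].
    by rewrite hh in hbP.
  + rewrite /descG eqxx /= inE he /=; apply/orP; right; apply/orP; left.
    apply/eqP => hy2; by rewrite hy2 pP in hbP; lia.
- subst y; case: (boolP (0 < j < k)) => hj.
    by apply: pe1; rewrite pe_sym; apply: D' hj _; rewrite esym.
  have hj' : j = 0 \/ j = k by lia.
  case: hi' hj' => hi2 [] hj2; subst i j; rewrite ?eirr // in he.
    by apply: pe1; rewrite pe_sym; apply: (L0 _ pk_B); rewrite esym.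
  by apply: pe1; apply: (L0 _ pk_B).
Qed.

Lemma eG x y : x \in S -> y \in S -> e x y = descG x y.
Proof.
move=> hx hy; apply/idP/idP => [he|/descG_e//].
case: (boolP (x \in P)) => hx'; first exact: aux.
case: (boolP (y \in P)) => hy'.
  by rewrite descG_sym; apply: aux => //; rewrite esym.
move: hx hy; rewrite !inE (negbTE hx') (negbTE hy') !orbF => hx hy.
by rewrite /descG /desc0 !inE hx hy hx' hy' he /= orbT.
Qed.

Lemma d0_notA x y : desc0 x y ->
  ~~ ((x == p k) && (y \in N)) && ~~ ((y == p k) && (x \in N)).
Proof.
have hk : p k \in Bp = false by rewrite inE pP // andbF.
move=> hd; apply/andP; split; apply/negP => /andP [/eqP hx hN];
 have := N_Bp _ hN; rewrite inE => /andP [_ hnP]; subst;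
 move: hd; rewrite /desc0 => /orP [/pe_P /andP [h1 h2] | /and3P [h1 h2 _]].
- by rewrite h2 in hnP.
- by rewrite hk in h1.
- by rewrite h1 in hnP.
- by rewrite hk in h2.
Qed.

Lemma eG' x y : x \in S -> y \in S -> transfer e p k x y = descG' x y.
Proof.
move=> hx hy; rewrite /transfer (eG _ _ hx hy) /descG /descG'.
case hd: (desc0 x y) => /=.
  by move: (d0_notA _ _ hd) => /andP [-> ->].
by case: ((x == p k) && (y \in N)); case: ((y == p k) && (x \in N)).
Qed.


Lemma bdec (b : bool) : b \/ ~~ b.
Proof. by case: b; [left|right]. Qed.

Definition tau x := if [pick i : 'I_k.+1 | p i == x] is Some i then p (k - i) else x.

Lemma tau_p i : i <= k -> tau (p i) = p (k - i).
Proof.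
move=> ik; rewrite /tau; case: pickP => [j /eqP hj | h].
  have hj' : (j : nat) = i by apply: pinj hj; rewrite inE ?ik // -ltnS.
  by rewrite hj'.
have ik' : i < k.+1 by [].
by have := h (Ordinal ik'); rewrite /= eqxx.
Qed.

Lemma tau_out x : x \notin P -> tau x = x.
Proof.
move=> hx; rewrite /tau; case: pickP => [j /eqP hj | //].
by rewrite -hj pP // -ltnS in hx.
Qed.

Lemma tauK x : tau (tau x) = x.
Proof.
case: (bdec (x \in P)) => hx; last by rewrite !tau_out.
case/inP: hx => i ik ->; rewrite !tau_p ?leq_subr //; congr p; lia.
Qed.

Lemma tau_inj : injective tau.
Proof. exact: (can_inj tauK). Qed.

Lemma tau_P x : (tau x \in P) = (x \in P).
Proof.
case: (bdec (x \in P)) => hx; last by rewrite tau_out.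
by case/inP: hx => i ik ->; rewrite tau_p // (pP _ ik) (pP (k - i)) // leq_subr.
Qed.

Lemma tau_Bp x : (tau x \in Bp) = (x \in Bp).
Proof.
case: (bdec (x \in P)) => hx; last by rewrite tau_out.
by rewrite !inE tau_P hx !andbF.
Qed.

Lemma tau_S x : (tau x \in S) = (x \in S).
Proof.
case: (bdec (x \in P)) => hx; last by rewrite tau_out.
by rewrite !in_setU tau_P hx !orbT.
Qed.

Lemma tau_pe1 x y : path_edge p k x y -> path_edge p k (tau x) (tau y).
Proof.
case/pathE => i [ik [[-> ->]|[-> ->]]]; rewrite !tau_p; try lia;
  have -> : k - i = (k - i.+1).+1 by lia.
  by rewrite pe_sym; apply: pe_intro; lia.
by apply: pe_intro; lia.
Qed.

Lemma tau_pe x y : path_edge p k (tau x) (tau y) = path_edge p k x y.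
Proof.
apply/idP/idP => [h|]; last exact: tau_pe1.
by rewrite -(tauK x) -(tauK y); apply: tau_pe1.
Qed.

Lemma N_P y : y \in N -> y \notin P.
Proof. by move/N_Bp; rewrite inE => /andP []. Qed.

Lemma tau_N y : (tau y \in N) = (y \in N).
Proof.
case: (bdec (y \in P)) => hy; last by rewrite tau_out.
apply/idP/idP => /N_P; by rewrite ?tau_P hy.
Qed.

Lemma tau_p0 x : (tau x == p 0) = (x == p k).
Proof.
case: (bdec (x \in P)) => hx; last first.
  rewrite tau_out //; apply/idP/idP => /eqP h; by rewrite h pP ?leq0n in hx.
case/inP: hx => i ik ->; rewrite tau_p // !pinjE ?leq_subr //; lia.
Qed.

Lemma tau_d0 x y : desc0 (tau x) (tau y) = desc0 x y.
Proof.
rewrite /desc0 tau_pe !tau_Bp.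
case hx: (x \in Bp); case hy: (y \in Bp) => //=.
move: hx hy; rewrite !inE => /andP [_ hx] /andP [_ hy].
by rewrite !tau_out.
Qed.

Lemma G_iso x y :
  induced e S x y = induced (transfer e p k) S (tau x) (tau y).
Proof.
rewrite /induced !tau_S.
case hx: (x \in S); case hy: (y \in S) => //=.
rewrite eG // eG' ?tau_S //.
by rewrite /descG /descG' tau_d0 !tau_p0 !tau_N.
Qed.


Hypothesis kev : ~~ odd k.

Lemma mainlem l :
  nwalks (induced e S) l (p 0) <= nwalks (induced (transfer e p k) S) l (p 0).
Proof.
rewrite !nwalksE.
have [m km] : exists m, k = m + m.
  by exists k./2; have := odd_double_half k; rewrite (negbTE kev) add0n -addnn.
apply: (W_mono _ _ [pred x | [exists i : 'I_k.+1, (i <= m) && (x == p i)]] (p m)).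
- move=> x /existsP [i /andP [im /eqP ->]] hxc y /and3P [hx hy he].
  have ik : i < m.
    rewrite ltn_neqAle im andbT; apply: contraNneq hxc => ->; by [].
  have hik : i <= k by lia.
  have hpi : path_edge p k (p i) y.
    move: he; rewrite (eG _ _ hx hy) /descG.
    have -> : (p i == p k) = false by rewrite pinjE; lia.
    have -> : (p i \in N) = false.
      by apply/negbTE/negP => /N_P; rewrite (pP i hik).
    rewrite /= !andbF !orbF /desc0.
    have -> : (p i \in Bp) = false by rewrite inE (pP i hik) andbF.
    by rewrite /= orbF.
  split.
    by rewrite /induced hx hy /= (eG' _ _ hx hy) /descG' /desc0 hpi.
  case/pathE: hpi => j [jk [[hij ->]|[-> hij]]].
    apply/existsP; have jk' : j.+1 < k.+1 by lia.
    exists (Ordinal jk'); rewrite /= eqxx andbT.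
    move/eqP: hij; rewrite pinjE; lia.
  apply/existsP; have jk' : j < k.+1 by lia.
  exists (Ordinal jk'); rewrite /= eqxx andbT.
  move/eqP: hij; rewrite pinjE; lia.
- move=> l'; rewrite (W_iso _ _ tau tau_inj G_iso l' (p m)) tau_p; last lia.
  by have -> : k - m = m by lia.
- apply/existsP; exists ord0; by rewrite /= eqxx.
Qed.

End Main.

Local Open Scope ring_scope.

Theorem corollary3 (V : finType) (e : rel V) (p : nat -> V) (k : nat) :
  is_tree e ->
  (1 <= k)%N ->
  {in [pred i | (i <= k)%N] &, injective p} ->
  (forall i, (i < k)%N -> e (p i) (p i.+1)) ->
  (forall i, (0 < i < k)%N -> deg e (p i) = 2%N) ->
  ~~ odd k ->
  forall l : nat, (1 <= l)%N ->
    (nwalks (induced e (compB e p k :|: path_verts p k)) l (p 0%N))%:Z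
      - (nwalks (path_edge p k) l (p 0%N))%:Z
    <= (nwalks (induced (transfer e p k) (compB e p k :|: path_verts p k)) l (p 0%N))%:Z
      - (nwalks (path_edge p k) l (p 0%N))%:Z.
Proof.
move=> tree k1 pinj pe pdeg kev l _.
have k2 : (1 < k)%N.
  by have := odd_double_half k; rewrite (negbTE kev) add0n; lia.
rewrite lerD2r lez_nat.
by apply: mainlem.
Qed.
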